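(* In the standard LLP setup, for every $N\ge1$: $L(G,\gamma^N_{optm})\supseteq L(G,\gamma^{N+1}_{optm})$.
   Context: Standard LLP setup. $\Sigma=\Sigma_c\,\dot\cup\,\Sigma_{uc}$ is a finite alphabet partitioned into controllable and uncontrollable events. The plant $G$ has generated language $L(G)\subseteq\Sigma^*$ and marked language $L_m(G)\subseteq L(G)$ with $L(G)=\overline{L_m(G)}$, where $\overline{M}$ denotes the set of all prefixes of strings in $M$. The legal language $K\subseteq L_m(G)$ satisfies $K=\overline{K}\cap L_m(G)$. For a prefix-closed language $L$, a language $M$ is controllable w.r.t. $L$ if $\overline{M}\Sigma_{uc}\cap L\subseteq\overline{M}$. For a language $L$ and $s\in\Sigma^*$: $L/s=\{t\in\Sigma^*: st\in L\}$; $L|_N=\{t\in L: |t|\le N\}$; $\Sigma_{L(G)}(s)=\{\sigma\in\Sigma: s\sigma\in L(G)\}$. For $M\subseteq\Sigma^*$, $M^{\uparrow/s|_N}$ denotes the supremal sublanguage of $M$ controllable w.r.t. $L(G)/s|_N$. The optimistic attitude gives $f^N_{optm}(s)=[K/s|_N\cup(\overline{K}/s|_N\setminus\overline{K}/s|_{N-1})]^{\uparrow/s|_N}$, and the LLP control policy is $\gamma^N_{optm}(s)=(\overline{f^N_{optm}(s)}\cap\Sigma)\cup(\Sigma_{uc}\cap\Sigma_{L(G)}(s))$. For a control policy $\gamma:\Sigma^*\to2^\Sigma$, $L(G,\gamma)$ is defined by $\epsilon\in L(G,\gamma)$ and $s\sigma\in L(G,\gamma)$ iff $s\in L(G,\gamma)$,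 $s\sigma\in L(G)$, $\sigma\in\gamma(s)$. *)

(* Defs.v *)
From mathcomp Require Import all_boot.
Set Implicit Arguments. Unset Strict Implicit. Unset Printing Implicit Defensive.

Section LLP.
Variable Sigma : finType.

Definition lang := seq Sigma -> Prop.

Definition pclos (M : lang) : lang := fun t => exists u, M (t ++ u).

Definition quot (L : lang) (s : seq Sigma) : lang := fun t => L (s ++ t).

Definition trunc (L : lang) (N : nat) : lang := fun t => L t /\ size t <= N.

Definition controllable (uc : pred Sigma) (L M : lang) : Prop :=
  forall t sigma, pclos M t -> uc sigma -> L (rcons t sigma) ->
    pclos M (rcons t sigma).

Definition supC (uc : pred Sigma) (L M : lang) : lang :=
  fun t => exists M' : lang,
    (forall u, M' u -> M u) /\ controllable uc L M' /\ M' t.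

(* f^N_optm(s) = [K/s|_N \cup (\overline{K}/s|_N \ \overline{K}/s|_{N-1})]^{\uparrow/s|_N} *)
Definition f_optm (uc : pred Sigma) (LG K : lang) (N : nat) (s : seq Sigma)
  : lang :=
  supC uc (trunc (quot LG s) N)
    (fun t => trunc (quot K s) N t \/
              (trunc (quot (pclos K) s) N t /\
               ~ trunc (quot (pclos K) s) (N - 1) t)).

Definition policy := seq Sigma -> Sigma -> Prop.

(* gamma^N_optm(s) = (\overline{f^N_optm(s)} \cap Sigma) \cup (Sigma_uc \cap Sigma_{L(G)}(s)) *)
Definition gamma_optm (uc : pred Sigma) (LG K : lang) (N : nat) : policy :=
  fun s sigma => pclos (f_optm uc LG K N s) [:: sigma] \/
                 (uc sigma /\ LG (rcons s sigma)).

Inductive closed_loop (LG : lang) (gamma : policy) : lang :=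
| cl_nil : closed_loop LG gamma [::]
| cl_rcons : forall s sigma, closed_loop LG gamma s -> LG (rcons s sigma) ->
    gamma s sigma -> closed_loop LG gamma (rcons s sigma).

End LLP.

(* Main.v *)
Require Import Defs.
From mathcomp Require Import all_boot.
From mathcomp Require Import zify.

Section H.
Variable Sigma : finType.

Lemma pclos_cat (M : lang Sigma) t u : pclos M (t ++ u) -> pclos M t.
Proof. by move=> [v Hv]; exists (u ++ v); rewrite catA. Qed.

Lemma gamma_mono (uc : pred Sigma) (LG K : lang Sigma) N (hN : 1 <= N) s sigma :
  gamma_optm uc LG K N.+1 s sigma -> gamma_optm uc LG K N s sigma.
Proof.
case=> [H|H]; last by right.
left.
case: H => u [M' [HM' [Hc HMu]]].
pose M'' : lang Sigma := fun t => pclos M' t /\ size t <= N /\ (M' t \/ size t = N).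
have specK : forall w, M' w -> pclos K (s ++ w).
  move=> w /HM' [[Hw _]|[[Hw _] _]].
    by exists [::]; rewrite cats0.
  exact: Hw.
have Pa : forall t, pclos M' t -> size t <= N -> pclos M'' t.
  move=> t [u' Hu'] Ht; rewrite /M''.
  case: (leqP (size (t ++ u')) N) => Hs.
    exists u'; split; first by exists [::]; rewrite cats0.
    by split => //; left.
  exists (take (N - size t) u').
  have Hsz : size (t ++ take (N - size t) u') = N.
    rewrite size_cat size_take; rewrite size_cat in Hs.
    case: ltnP => H; lia.
  split; last by split; [rewrite Hsz|right].
  by exists (drop (N - size t) u'); rewrite -catA cat_take_drop.
have Pb : forall t, pclos M'' t -> pclos M' t /\ size t <= N.
  move=> t [u' [H1 [H2 _]]]; split; first exact: pclos_cat H1.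
  by rewrite size_cat in H2; lia.
have H1 : pclos M' [:: sigma] by exists u.
have [v Hv] := Pa _ H1 hN.
exists v.
exists M''; split; [|split].
- rewrite /M''; move=> t [Hp [Hs [Hm|Hs']]].
    case: (HM' _ Hm) => [[Hk _]|[[Hk _] Hn]].
      by left; split.
    by exfalso; apply: Hn; split => //; rewrite subn1 /=.
  right; split; first split => //.
    by case: Hp => w Hw; rewrite /quot; apply: (@pclos_cat K (s ++ t) w); rewrite -catA; exact: specK.
  by move=> [_ H]; lia.
- move=> t a Ht Ha [HL Hs].
  have [Ht1 Ht2] := Pb _ Ht.
  apply: Pa => //.
  apply: Hc => //; split => //; lia.
- exact: Hv.
Qed.
End H.

Theorem theorem2 (Sigma : finType) (uc : pred Sigma) (LG Lm K : lang Sigma)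
  (hLG : forall t, LG t <-> pclos Lm t)
  (hLm : forall t, Lm t -> LG t)
  (hKLm : forall t, K t -> Lm t)
  (hK : forall t, K t <-> (pclos K t /\ Lm t))
  (N : nat) (hN : 1 <= N) :
  forall s, closed_loop LG (gamma_optm uc LG K N.+1) s ->
            closed_loop LG (gamma_optm uc LG K N) s.
Proof.
move=> s; elim=> [|t a _ IH HL Hg]; first exact: cl_nil.
by apply: cl_rcons => //; apply: gamma_mono.
Qed.
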